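(* Let $n$ be a positive integer, $\lambda$ an infinite cardinal, and $\tau$ a shift-continuous feebly compact $T_1$-topology on the semilattice $\exp_n\lambda$. Then for every open neighbourhood $U(0)$ of the zero $0=\varnothing$ in $(\exp_n\lambda,\tau)$ there exist finitely many $x_1,\ldots,x_m\in\lambda$ such that $$\exp_n\lambda\setminus\operatorname{cl}_{\exp_n\lambda}(U(0))\subseteq{\uparrow}\{x_1\}\cup\cdots\cup{\uparrow}\{x_m\}.$$
   Context: For a positive integer $n$ and a cardinal $\lambda$, $\exp_n\lambda=\{A\subseteq\lambda\colon |A|\leqslant n\}$, regarded as a semilattice under $\cap$; its natural order is inclusion and its zero is $\varnothing$. For $e$ in a semilattice, ${\uparrow}e=\{f\colon e\leqslant f\}$; so ${\uparrow}\{x\}=\{A\in\exp_n\lambda\colon x\in A\}$. A topology on a semilattice is shift-continuous if the semilattice operation is separately continuous. A topological space is feebly compact if every locally finite open cover of it is finite. *)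

(* Defs.v *)
From HB Require Import structures.
From mathcomp Require Import all_boot all_order.
From mathcomp Require Import boolp classical_sets cardinality.
From mathcomp Require Import finmap.

Set Implicit Arguments.
Unset Strict Implicit.
Unset Printing Implicit Defensive.

Local Open Scope classical_set_scope.

Definition exp_set (n : nat) (L : choiceType) : Type :=
  {A : {fset L} | (#|` A| <= n)%N}.

Lemma expn_meet_subproof n (L : choiceType) (A B : exp_set n L) :
  (#|` fsetI (sval A) (sval B)| <= n)%N.
Proof.
apply: leq_trans (fsubset_leq_card (fsubsetIl _ _)) _.
exact: (proj2_sig A).
Qed.

Definition expn_meet n (L : choiceType) (A B : exp_set n L) : exp_set n L :=
  exist _ (fsetI (sval A) (sval B)) (expn_meet_subproof A B).

Definition expn_zero n (L : choiceType) : exp_set n L :=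
  exist _ fset0 (leq0n n : (#|` (fset0 : {fset L})| <= n)%N).

Definition up_singleton n (L : choiceType) (x : L) : set (exp_set n L) :=
  [set A | x \in sval A].

Section Topo.
Variable X : Type.
Variable op : set (set X).

Definition is_topology : Prop :=
  [/\ op setT,
      (forall U V, op U -> op V -> op (U `&` V)) &
      (forall F : set (set X), F `<=` op -> op (\bigcup_(U in F) U))].

Definition closure_of (A : set X) : set X :=
  [set x | forall U, op U -> U x -> U `&` A !=set0].

Definition T1_top : Prop :=
  forall x y : X, x <> y -> exists U, [/\ op U, U x & ~ U y].

Definition locally_finite_family (F : set (set X)) : Prop :=
  forall x, exists W, [/\ op W, W x &
     finite_set [set U | F U /\ U `&` W !=set0]].

Definition feebly_compact : Prop :=
  forall F : set (set X), F `<=` op -> \bigcup_(U in F) U = setT ->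
    locally_finite_family F -> finite_set F.

Definition continuous_map (f : X -> X) : Prop :=
  forall U, op U -> op (f @^-1` U).

Definition shift_continuous (m : X -> X -> X) : Prop :=
  forall a, continuous_map (m a) /\ continuous_map (fun x => m x a).
End Topo.

(* Main.v *)
Require Import Defs.
From HB Require Import structures.
From mathcomp Require Import all_boot all_order.
From mathcomp Require Import boolp classical_sets cardinality.
From mathcomp Require Import finmap.
Set Implicit Arguments.
Unset Strict Implicit.
Local Open Scope classical_set_scope.


Lemma exp_eqP n (L : choiceType) (A B : exp_set n L) : sval A = sval B -> A = B.
Proof.
case: A B => [a pa] [b pb] /= eab; subst b; congr exist; exact: eq_irrelevance.
Qed.

Lemma op_local (X : Type) (op : set (set X)) (A : set X) : is_topology op ->
  (forall x, A x -> exists W, [/\ op W, W x & W `<=` A]) -> op A.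
Proof.
case=> _ _ hU hA.
have -> : A = \bigcup_(W in [set W | op W /\ W `<=` A]) W.
  apply/seteqP; split => [x Ax|x [W [_ WA] Wx]]; last exact: WA.
  by have [W [oW Wx WA]] := hA x Ax; exists W.
by apply: hU => W [].
Qed.

Lemma op_compl1 (X : Type) (op : set (set X)) (y : X) : is_topology op ->
  T1_top op -> op (~` [set y]).
Proof.
move=> hT h1; apply: op_local => // x xy.
have [U [oU Ux Uy]] := h1 x y xy.
by exists U; split => // z Uz zy; apply: Uy; rewrite -zy.
Qed.

Definition single n (L : choiceType) (x : L) (hn : (0 < n)%N) : exp_set n L :=
  exist _ [fset x]%fset (eq_ind_r (fun k => (k <= n)%N) hn (cardfs1 x)).

Lemma op_up1 n (L : choiceType) op (hn : (0 < n)%N) (x : L) :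
  is_topology op -> shift_continuous op (@expn_meet n L) -> T1_top op ->
  op [set D : exp_set n L | x \in sval D].
Proof.
move=> hT hS h1.
have := (hS (single x hn)).1 _ (op_compl1 (expn_zero n L) hT h1).
congr op; apply/seteqP; split => D /=.
  move=> h; case: (boolP (x \in sval D)) => // xD; exfalso; apply: h; apply: exp_eqP => /=.
  by rewrite fsetIC fsetI1 (negbTE xD).
move=> xD h; have := congr1 sval h => /=.
by rewrite fsetIC fsetI1 xD => /eqP; rewrite -cardfs_eq0 cardfs1.
Qed.

Lemma op_nup1 n (L : choiceType) op (hn : (0 < n)%N) (x : L) :
  is_topology op -> shift_continuous op (@expn_meet n L) -> T1_top op ->
  op [set D : exp_set n L | x \notin sval D].
Proof.
move=> hT hS h1.
have := (hS (single x hn)).1 _ (op_compl1 (single x hn) hT h1).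
congr op; apply/seteqP; split => D /=.
  move=> h; apply/negP => xD; apply: h; apply: exp_eqP => /=.
  by rewrite fsetIC fsetI1 xD.
move=> xD h; have := congr1 sval h => /=.
rewrite fsetIC fsetI1 (negbTE xD) => /eqP; by rewrite eq_sym -cardfs_eq0 cardfs1.
Qed.

Lemma op_avoid n (L : choiceType) op (hn : (0 < n)%N) (s : seq L) :
  is_topology op -> shift_continuous op (@expn_meet n L) -> T1_top op ->
  op [set D : exp_set n L | all (fun x => x \notin sval D) s].
Proof.
move=> hT hS h1; elim: s => [|x s IH] /=.
  have -> : [set D : exp_set n L | true] = setT by apply/seteqP; split.
  by case: hT.
have -> : [set D : exp_set n L | (x \notin sval D) && all (fun x => x \notin sval D) s]
   = [set D | x \notin sval D] `&` [set D | all (fun x => x \notin sval D) s].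
  by apply/seteqP; split => D /= => [/andP[]|[-> ->]].
by case: (hT) => _ hI _; apply: hI => //; apply: op_nup1.
Qed.

Lemma op_contain n (L : choiceType) op (hn : (0 < n)%N) (s : seq L) :
  is_topology op -> shift_continuous op (@expn_meet n L) -> T1_top op ->
  op [set D : exp_set n L | all (fun x => x \in sval D) s].
Proof.
move=> hT hS h1; elim: s => [|x s IH] /=.
  have -> : [set D : exp_set n L | true] = setT by apply/seteqP; split.
  by case: hT.
have -> : [set D : exp_set n L | (x \in sval D) && all (fun x => x \in sval D) s]
   = [set D | x \in sval D] `&` [set D | all (fun x => x \in sval D) s].
  by apply/seteqP; split => D /= => [/andP[]|[-> ->]].
by case: (hT) => _ hI _; apply: hI => //; apply: op_up1.
Qed.

Fixpoint build (T : Type) (f : seq T -> T) (k : nat) : seq T :=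
  if k is k'.+1 then f (build f k') :: build f k' else [::].

Definition elts n (L : choiceType) (s : seq (exp_set n L)) : seq L :=
  flatten (map (fun D => enum_fset (sval D)) s).

Lemma op_ncl (X : Type) (op : set (set X)) (U0 : set X) : is_topology op ->
  op (~` closure_of op U0).
Proof.
move=> hT; apply: op_local => // A /existsNP [W /not_implyP [oW /not_implyP [WA hW]]].
exists W; split => // B WB hB; apply: hW; exact: hB W oW WB.
Qed.

Lemma step n (L : choiceType) op (hn : (0 < n)%N) (U0 : set (exp_set n L)) :
  is_topology op -> shift_continuous op (@expn_meet n L) -> T1_top op ->
  (forall xs : seq L, exists A, ~ closure_of op U0 A /\ all (fun x => x \notin sval A) xs) ->
  forall ys : seq L, exists B, [/\ ~ closure_of op U0 B, op [set B] &
     all (fun x => x \notin sval B) ys].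
Proof.
move=> hT hS h1 hA ys.
pose O := [set D : exp_set n L | ~ closure_of op U0 D /\ all (fun x => x \notin sval D) ys].
have oO : op O.
  have -> : O = (~` closure_of op U0) `&` [set D | all (fun x => x \notin sval D) ys] by [].
  by case: (hT) => _ hI _; apply: hI; [apply: op_ncl | apply: op_avoid].
pose P := fun m => `[< exists D, O D /\ #|` sval D|%fset = m >].
have exP : exists i, P i.
  have [A hA'] := hA ys; exists #|` sval A|%fset; apply/asboolP; by exists A.
have ubP : forall i, P i -> (i <= n)%N.
  by move=> i /asboolP [D [_ <-]]; exact: (proj2_sig D).
case: (ex_maxnP exP ubP) => i /asboolP [B [[hB1 hB2] hBi]] hmax.
exists B; split => //.
have -> : [set B] = O `&` [set D | all (fun x => x \in sval D) (enum_fset (sval B))].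
  apply/seteqP; split => D /=.
    move=> ->; split; first by split.
    by apply/allP.
  move=> [hO /allP hall]; apply: exp_eqP; apply/eqP; rewrite eq_sym eqEfcard.
  apply/andP; split; first by apply/fsubsetP => x xB; exact: hall.
  rewrite hBi; apply: hmax; apply/asboolP; by exists D.
by case: (hT) => _ hI _; apply: hI => //; apply: op_contain.
Qed.

Unset Implicit Arguments.
Set Strict Implicit.

Theorem proposition8 (n : nat) (L : choiceType)
    (op : set (set (exp_set n L))) :
  (0 < n)%N ->
  infinite_set [set: L] ->
  is_topology op ->
  shift_continuous op (@expn_meet n L) ->
  feebly_compact op ->
  T1_top op ->
  forall U0 : set (exp_set n L), op U0 -> U0 (@expn_zero n L) ->
  exists xs : seq L,
    ~` closure_of op U0 `<=` \bigcup_(x in [set x | x \in xs]) @up_singleton n L x.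
Proof.
move=> hn _ hT hS hF h1 U0 oU0 U00.
apply: contrapT => hneg.
have hneg' : forall xs : seq L, exists A, ~ closure_of op U0 A /\ all (fun x => x \notin sval A) xs.
  move=> xs; apply: contrapT => hno; apply: hneg; exists xs => A hA.
  have : ~ all (fun x => x \notin sval A) xs by move=> h; apply: hno; exists A.
  move/negP; rewrite -has_predC => /hasP [x xxs /negPn xA]; by exists x.
have hVU : forall A, U0 A -> closure_of op U0 A.
  by move=> A UA U oU UAx; exists A.
have [f hf] := choice (fun s : seq (exp_set n L) => step hn hT hS h1 hneg' (elts s)).
pose B k := f (build f k).
have hB k : [/\ ~ closure_of op U0 (B k), op [set B k] &
     all (fun x => x \notin sval (B k)) (elts (build f k))] by exact: hf.
have hmem j k x : (j < k)%N -> x \in sval (B j) -> x \in elts (build f k).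
  elim: k => [//|k IH]; rewrite ltnS leq_eqVlt => /orP [/eqP -> | jk] xj /=;
    rewrite /elts /= mem_cat; first by rewrite xj.
  by rewrite IH ?orbT.
have hdisj j k x : (j < k)%N -> x \in sval (B j) -> x \notin sval (B k).
  move=> jk xj; have [_ _ /allP] := hB k; apply; exact: hmem jk xj.
have hne k : exists x, x \in sval (B k).
  apply/fset0Pn/negP => /eqP e; have [hk _ _] := hB k; apply: hk.
  have -> : B k = expn_zero n L by apply: exp_eqP.
  exact: hVU.
have huniq j k x : x \in sval (B j) -> x \in sval (B k) -> j = k.
  move=> xj xk; case: (ltngtP j k) => // jk.
    by move: (hdisj _ _ _ jk xj); rewrite xk.
  by move: (hdisj _ _ _ jk xk); rewrite xj.
have Binj j k : B j = B k -> j = k.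
  move=> e; have [x xj] := hne j; apply: (huniq _ _ x xj); by rewrite -e.
pose R := ~` range B.
have keyR : forall C, R C -> exists W, [/\ op W, W C & W `<=` R].
  move=> C RC; case: (boolP (sval C == fset0%fset)) => [/eqP e|].
    have eC : C = expn_zero n L by apply: exp_eqP.
    exists U0; split => //; first by rewrite eC.
    move=> D UD [k _ Dk]; have [hk _ _] := hB k; apply: hk; rewrite Dk; exact: hVU.
  move/fset0Pn => [x xC].
  have [k0 hk0] : exists k0, forall k, x \in sval (B k) -> k = k0.
    case: (EM (exists k1, x \in sval (B k1))) => [[k1 xk1]|hno].
      by exists k1 => k xk; exact: huniq xk xk1.
    by exists 0%N => k xk; exfalso; apply: hno; exists k.
  exists ([set D | all (fun y => y \in sval D) (enum_fset (sval C))] `&` ~` [set B k0]).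
  split.
  - by case: (hT) => _ hI _; apply: hI; [apply: op_contain | apply: op_compl1].
  - split; first by apply/allP.
    by move=> /= eC; apply: RC; exists k0.
  - move=> D [/allP hD hD0] [k _ Dk]; apply: hD0 => /=.
    by rewrite -Dk (hk0 k) //; rewrite Dk; exact: hD.
have oR : op R.
  by apply: op_local => // C /keyR.
pose F := [set W | (exists k, W = [set B k]) \/ W = R].
have FT : \bigcup_(U in F) U = setT.
  apply/seteqP; split => // D _.
  case: (EM (exists k, B k = D)) => [[k Dk]|hno].
    by exists [set B k]; [left; exists k | rewrite /= Dk].
  by exists R; [right | move=> [k _ Dk]; apply: hno; exists k].
have Fop : F `<=` op.
  by move=> W [[k ->]|->] //; have [_ ? _] := hB k.
have Flf : locally_finite_family op F.
  move=> C; case: (EM (R C)) => [RC|].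
    have [W [oW WC WR]] := keyR C RC; exists W; split => //.
    apply: (sub_finite_set _ (finite_set1 R)) => U [[[k ->]|->] // [D [/= Dk WD]]].
    by exfalso; apply: (WR D WD); exists k.
  move/contrapT => [k _ Ck].
  exists [set B k]; split => //; first by have [_ ? _] := hB k.
  apply: (sub_finite_set _ (finite_set1 [set B k])) => U [[[j ->]|->] [D [/= Dj Dk]]] /=.
    by rewrite (Binj j k) // -Dj -Dk.
  by exfalso; apply: Dj; exists k; rewrite // Dk.
have finF := hF F Fop FT Flf.
have : finite_set ((fun k => [set B k]) @^-1` F).
  apply: finite_preimage => // j k _ _ e.
  apply: Binj; have : [set B j] (B j) by []; by rewrite e.
apply: contra_not (infinite_nat) => h; apply: sub_finite_set h => k _ /=.
by left; exists k.
Qed.
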